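(* Let $\mathcal A=\mathcal R$ be a finite set of $n_a$ units with random treatment vector $\mathbf T$, edge potential outcomes $E_{ar}$, realized edges $e_{ar}$, weights $w_{ar},u_{ar},c_{ar}$ and outcome model $y_a=\alpha_a+\beta_ax_a+\gamma_aT_a$ as in the context. Suppose $G$ is a known anchor subgraph and: (a) edges are $r$-driven; (b) the $T_r$ are independent Bernoulli$(p)$ with $p\in(0,1)$; (c) $\{(a,r)\mid u_{ar}\neq0\}\subset G$; (d) $c_{ar}=\mathbb I((a,r)\in G)$; (e) $w_{ar}\neq0$ for all $(a,r)\in G$; (f) $|\{r\mid u_{ar}\neq0\}|>0$ for all $a$. If moreover $w_{aa}=u_{aa}=0$ for all $a$, then $$\hat\mu^{u,c}_{uni}=\frac1{n_a}\sum_a\left[\hat\beta^u_a\cdot\widehat{\mathcal W_a(\mathbf 1)}^c+\hat\gamma_a\right]$$ is an unbiased estimator of the TTE $\frac1{n_a}\sum_a[\mathcal W_a(\mathbf 1)\beta_a+\gamma_a]$.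
   Context: Setting (endogenous unipartite interference graph): the analysis units and randomization units coincide, $\mathcal A=\mathcal R$, $n_a$ units. A random treatment vector $\mathbf T=(T_r)_{r\in\mathcal R}$ is assigned; all randomness comes from $\mathbf T$. For each ordered pair $(a,r)$ there is an unknown edge potential outcome function $E_{ar}:\{0,1\}^{n_a}\to\{0,1\}$ (possibly $E_{ar}\neq E_{ra}$) with observed realization $e_{ar}=E_{ar}(\mathbf T)$. Edges are $r$-driven if each $E_{ar}(\mathbf T)$ depends on $\mathbf T$ only through $T_r$. An anchor subgraph is a set $G\subset\mathcal A\times\mathcal R$ with $E_{ar}(\mathbf T)=1$ for all $\mathbf T$ and all $(a,r)\in G$. Outcome model: with known real weights $w_{ar}$, $y_a=Y_a(\mathbf T)=\alpha_a+\beta_ax_a+\gamma_aT_a$, where $x_a=\sum_rT_rE_{ar}(\mathbf T)w_{ar}$ and $\alpha_a,\beta_a,\gamma_a$ are unknown constants. TTE: $\frac1{n_a}\sum_a[Y_a(\mathbf 1)-Y_a(\mathbf 0)]=\frac1{n_a}\sum_a[\mathcal W_a(\mathbf 1)\beta_a+\gamma_a]$ with $\mathcal W_a(\mathbf 1)=\sum_rw_{ar}E_{ar}(\mathbf 1)$. Estimators: for fixed real weights $u_{ar},c_{ar}$, $z^u_a=\sum_rT_ru_{ar}$, $\hat\beta^u_a=y_a(z^u_a-\mathbb Ez^u_a)/\mathrm{Cov}(x_a,z^u_a)$, $\widehat{\mathcal W_a(\mathbf 1)}^c=\sum_r\left[\frac{T_rw_{ar}(e_{ar}-c_{ar})}{p}+w_{ar}c_{ar}\right]$,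 and $\hat\gamma_a=T_ay_a/p-(1-T_a)y_a/(1-p)$. *)

(* Defs.v *)
From mathcomp Require Import all_boot all_order all_algebra.
Set Implicit Arguments. Unset Strict Implicit. Unset Printing Implicit Defensive.
Import Order.TTheory GRing.Theory Num.Theory.
Local Open Scope ring_scope.

Section Defs.
Variables (R : realFieldType) (n : nat).

Definition trt := {ffun 'I_n -> bool}.

Definition b2R (b : bool) : R := (b : nat)%:R.

Definition bern_prob (p : R) (T : trt) : R :=
  \prod_(r < n) (if T r then p else 1 - p).

Definition Exp (p : R) (f : trt -> R) : R :=
  \sum_(T : trt) bern_prob p T * f T.

Definition Cov (p : R) (f g : trt -> R) : R :=
  Exp p (fun T => f T * g T) - Exp p f * Exp p g.

Definition all_ones : trt := [ffun => true].

Variable E : 'I_n -> 'I_n -> trt -> bool.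

Definition r_driven : Prop :=
  forall (a r : 'I_n) (T T' : trt), T r = T' r -> E a r T = E a r T'.

Definition anchor_subgraph (G : {set 'I_n * 'I_n}) : Prop :=
  forall (a r : 'I_n) (T : trt), (a, r) \in G -> E a r T = true.

Variables (w : 'I_n -> 'I_n -> R) (alpha beta gamma : 'I_n -> R).

Definition xexp (a : 'I_n) (T : trt) : R :=
  \sum_(r < n) b2R (T r) * b2R (E a r T) * w a r.

Definition Yout (a : 'I_n) (T : trt) : R :=
  alpha a + beta a * xexp a T + gamma a * b2R (T a).

Definition W1 (a : 'I_n) : R := \sum_(r < n) w a r * b2R (E a r all_ones).

Definition TTE : R := n%:R^-1 * \sum_(a < n) (W1 a * beta a + gamma a).

Variables (p : R) (u c : 'I_n -> 'I_n -> R).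

Definition zu (a : 'I_n) (T : trt) : R := \sum_(r < n) b2R (T r) * u a r.

Definition beta_hat (a : 'I_n) (T : trt) : R :=
  Yout a T * (zu a T - Exp p (zu a)) / Cov p (xexp a) (zu a).

Definition W1_hat (a : 'I_n) (T : trt) : R :=
  \sum_(r < n) (b2R (T r) * w a r * (b2R (E a r T) - c a r) / p + w a r * c a r).

Definition gamma_hat (a : 'I_n) (T : trt) : R :=
  b2R (T a) * Yout a T / p - (1 - b2R (T a)) * Yout a T / (1 - p).

Definition mu_hat_uni (T : trt) : R :=
  n%:R^-1 * \sum_(a < n) (beta_hat a T * W1_hat a T + gamma_hat a T).

End Defs.

(* Main.v *)
Require Import Defs.
From mathcomp Require Import all_boot all_order all_algebra.
From mathcomp Require Import ring lra.
Set Implicit Arguments. Unset Strict Implicit. Unset Printing Implicit Defensive.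
Import Order.TTheory GRing.Theory Num.Theory.
Local Open Scope ring_scope.

Section Gen.
Variables (R : realFieldType) (n : nat) (p : R).

Lemma Exp_ext (f g : trt n -> R) : (forall T, f T = g T) -> Exp p f = Exp p g.
Proof. by move=> H; apply: eq_bigr => T _; rewrite H. Qed.

Lemma Exp_add (f g : trt n -> R) : Exp p (fun T => f T + g T) = Exp p f + Exp p g.
Proof. by rewrite /Exp -big_split; apply: eq_bigr => T _; rewrite mulrDr. Qed.

Lemma Exp_scale (k : R) (f : trt n -> R) : Exp p (fun T => k * f T) = k * Exp p f.
Proof. by rewrite /Exp mulr_sumr; apply: eq_bigr => T _; rewrite mulrCA. Qed.

Lemma Exp_sum m (F : 'I_m -> trt n -> R) :
  Exp p (fun T => \sum_(i < m) F i T) = \sum_(i < m) Exp p (F i).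
Proof.
rewrite /Exp; under eq_bigr do rewrite mulr_sumr.
by rewrite exchange_big.
Qed.

Lemma Exp_prod (h : 'I_n -> bool -> R) :
  Exp p (fun T => \prod_i h i (T i)) = \prod_i (p * h i true + (1 - p) * h i false).
Proof.
rewrite /Exp /bern_prob.
transitivity (\prod_i \sum_(b : bool) (if b then p else 1 - p) * h i b).
  rewrite bigA_distr_bigA; apply: eq_bigr => T _; by rewrite big_split.
by apply: eq_bigr => i _; rewrite big_bool.
Qed.

Lemma sumP : \sum_(T : trt n) bern_prob p T = 1.
Proof.
have H := Exp_prod (fun _ _ => 1).
rewrite [X in _ = X]big1 in H; last by move=> i _; rewrite !mulr1 addrC subrK.
rewrite -[RHS]H /Exp; apply: eq_bigr => T _; by rewrite big1 ?mulr1.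
Qed.

Lemma Exp_const (k : R) : Exp p (fun _ : trt n => k) = k.
Proof. by rewrite /Exp -mulr_suml sumP mul1r. Qed.

Definition b2R' (b : bool) : R := b2R R b.

Lemma Exp_T (r : 'I_n) : Exp p (fun T => b2R R (T r)) = p.
Proof.
have H := Exp_prod (fun i b => if i == r then b2R R b else 1).
rewrite [X in _ = X](bigD1 r) //= eqxx [X in _ = _ * X]big1 in H; last first.
  by move=> i /negPf ->; rewrite !mulr1 addrC subrK.
rewrite /b2R /= mulr1 mulr0 addr0 mulr1 in H.
rewrite -[RHS]H; apply: Exp_ext => T; rewrite (bigD1 r) //= eqxx big1 ?mulr1 //.
by move=> i /negPf ->.
Qed.

Definition mixf (A : {set 'I_n}) (X Y : trt n) : trt n :=
  [ffun i => if i \in A then X i else Y i].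

Lemma Exp_indep (A : {set 'I_n}) (f g : trt n -> R) :
  (forall T T' : trt n, (forall i, i \in A -> T i = T' i) -> f T = f T') ->
  (forall T T' : trt n, (forall i, i \notin A -> T i = T' i) -> g T = g T') ->
  Exp p (fun T => f T * g T) = Exp p f * Exp p g.
Proof.
move=> Hf Hg.
rewrite /Exp mulr_suml.
under [RHS]eq_bigr do rewrite mulr_sumr.
rewrite pair_bigA /=.
pose h := fun XY : trt n * trt n => (mixf A XY.1 XY.2, mixf A XY.2 XY.1).
have hK : involutive h.
  move=> [X Y]; rewrite /h /=; congr pair; apply/ffunP => i; rewrite !ffunE;
  by case: (i \in A).
rewrite (reindex_inj (inv_inj hK)) /=.
have Hpt : forall X Y : trt n, bern_prob p (mixf A X Y) * f (mixf A X Y) *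
   (bern_prob p (mixf A Y X) * g (mixf A Y X)) = bern_prob p X * (f X * g X) * bern_prob p Y.
  move=> X Y.
  have -> : f (mixf A X Y) = f X by apply: Hf => i iA; rewrite ffunE iA.
  have -> : g (mixf A Y X) = g X by apply: Hg => i iA; rewrite ffunE (negPf iA).
  have HP : bern_prob p (mixf A X Y) * bern_prob p (mixf A Y X) = bern_prob p X * bern_prob p Y.
    rewrite /bern_prob -!big_split; apply: eq_bigr => i _; rewrite !ffunE.
    by case: (i \in A) => //; exact: mulrC.
  rewrite mulrACA HP; ring.
rewrite (eq_bigr (fun j => bern_prob p j.1 * (f j.1 * g j.1) * bern_prob p j.2)); last first.
  by move=> [X Y] _; exact: Hpt.
rewrite -(pair_bigA _ (fun X Y => bern_prob p X * (f X * g X) * bern_prob p Y)) /=.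
by apply: eq_bigr => X _; rewrite -mulr_sumr sumP mulr1.
Qed.

Definition dep (A : {set 'I_n}) (f : trt n -> R) :=
  forall T T' : trt n, (forall i, i \in A -> T i = T' i) -> f T = f T'.

Lemma Exp_indep' (A : {set 'I_n}) f g : dep A f -> dep (~: A) g ->
  Exp p (fun T => f T * g T) = Exp p f * Exp p g.
Proof.
move=> Hf Hg; apply: Exp_indep Hf _ => T T' H; apply: Hg => i; rewrite in_setC; exact: H.
Qed.

Lemma dep_add (A : {set 'I_n}) f g : dep A f -> dep A g -> dep A (fun T => f T + g T).
Proof. by move=> Hf Hg T T' H; rewrite (Hf T T') // (Hg T T'). Qed.

Lemma dep_mul (A : {set 'I_n}) f g : dep A f -> dep A g -> dep A (fun T => f T * g T).
Proof. by move=> Hf Hg T T' H; rewrite (Hf T T') // (Hg T T'). Qed.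

Lemma dep_cst (A : {set 'I_n}) k : dep A (fun _ => k).
Proof. by []. Qed.

Lemma dep_lin (A : {set 'I_n}) (k : 'I_n -> R) : (forall r, r \notin A -> k r = 0) ->
  dep A (fun T => \sum_r b2R R (T r) * k r).
Proof.
move=> Hk T T' H; apply: eq_bigr => r _.
case: (boolP (r \in A)) => rA; first by rewrite H.
by rewrite Hk // !mulr0.
Qed.

Lemma Exp_lin (k : 'I_n -> R) :
  Exp p (fun T => \sum_r b2R R (T r) * k r) = p * \sum_r k r.
Proof.
rewrite Exp_sum mulr_sumr; apply: eq_bigr => r _.
rewrite (Exp_ext (g := fun T => k r * b2R R (T r))); last by move=> T; rewrite mulrC.
by rewrite Exp_scale Exp_T mulrC.
Qed.

Lemma Exp_lin1 (r : 'I_n) (k m : R) :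
  Exp p (fun T => b2R R (T r) * k + m) = p * k + m.
Proof.
rewrite Exp_add Exp_const (Exp_ext (g := fun T => k * b2R R (T r))); last by move=> T; rewrite mulrC.
by rewrite Exp_scale Exp_T mulrC.
Qed.

End Gen.

Unset Implicit Arguments.

Section Main.
Variables (R : realFieldType) (n : nat) (E : 'I_n -> 'I_n -> trt n -> bool)
  (w u c : 'I_n -> 'I_n -> R) (alpha beta gamma : 'I_n -> R) (p : R)
  (G : {set 'I_n * 'I_n}).
Hypotheses (HG : anchor_subgraph E G) (Hrd : r_driven E) (Hp : 0 < p < 1)
  (Hu : forall a r : 'I_n, u a r != 0 -> (a, r) \in G)
  (Hc : forall a r : 'I_n, c a r = if (a, r) \in G then 1 else 0 : R)
  (Hw : forall a r : 'I_n, (a, r) \in G -> w a r != 0)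
  (Hcov : forall a : 'I_n, Cov p (xexp E w a) (zu u a) != 0)
  (Hself : forall a : 'I_n, w a a = 0 /\ u a a = 0).

Lemma b2R0 : b2R R false = 0. Proof. by []. Qed.
Lemma b2R1 : b2R R true = 1. Proof. by []. Qed.

Lemma p0 : p != 0. Proof. by case/andP: Hp => H _; rewrite lt0r_neq0. Qed.
Lemma p1 : 1 - p != 0. Proof. by case/andP: Hp => _ H; rewrite lt0r_neq0 // subr_gt0. Qed.

Variable a : 'I_n.
Local Notation S := [set r | (a, r) \in G].
Let k r := b2R R (E a r (all_ones n)) * w a r.

Lemma TE (T : trt n) r : b2R R (T r) * b2R R (E a r T) = b2R R (T r) * b2R R (E a r (all_ones n)).
Proof.
case Tr: (T r); last by rewrite b2R0 !mul0r.
by rewrite (Hrd a r T (all_ones n)) // Tr ffunE.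
Qed.

Lemma xE T : xexp E w a T = \sum_r b2R R (T r) * k r.
Proof. by apply: eq_bigr => r _; rewrite TE /k mulrA. Qed.

Definition XS T := \sum_r b2R R (T r) * (if r \in S then k r else 0).
Definition XN T := \sum_r b2R R (T r) * (if r \in S then 0 else k r).

Lemma xsplit T : xexp E w a T = XS T + XN T.
Proof.
rewrite xE /XS /XN -big_split; apply: eq_bigr => r _.
by case: (r \in S); rewrite /= ?mulr0 ?addr0 ?add0r.
Qed.

Lemma dep_XS : dep S XS.
Proof. by apply: dep_lin => r /negPf ->. Qed.

Lemma dep_XN : dep (~: S) XN.
Proof. by apply: dep_lin => r; rewrite in_setC negbK => ->. Qed.

Lemma dep_z : dep S (zu u a).
Proof.
apply: dep_lin => r rS; apply/eqP; apply/negP => /negP /Hu H.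
by move: rS; rewrite inE H.
Qed.

Lemma aNS : a \notin S.
Proof. by rewrite inE; apply/negP => /Hw; rewrite (Hself a).1 eqxx. Qed.

Lemma dep_Ta : dep (~: S) (fun T => b2R R (T a)).
Proof. by move=> T T' H; rewrite H // in_setC aNS. Qed.

Definition c0 := \sum_r (if r \in S then w a r else 0).

Lemma WE T : W1_hat E w p c a T = c0 + XN T / p.
Proof.
rewrite /W1_hat /c0 /XN mulr_suml -big_split; apply: eq_bigr => r _.
rewrite Hc; case rS: (r \in S); move: rS; rewrite inE => rS; rewrite rS.
  by rewrite (HG a r T rS) b2R1 subrr /=; ring.
rewrite (_ : b2R R (T r) * w a r * (b2R R (E a r T) - 0) = (b2R R (T r) * b2R R (E a r T)) * w a r); last by ring.
by rewrite /= TE /k; ring.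
Qed.

Lemma dep_W : dep (~: S) (W1_hat E w p c a).
Proof. by move=> T T' H; rewrite !WE (dep_XN T T' H). Qed.

Lemma EW : Exp p (W1_hat E w p c a) = W1 E w a.
Proof.
rewrite (Exp_ext p (g := fun T => p^-1 * XN T + c0)); last by move=> T; rewrite WE addrC mulrC.
rewrite Exp_add Exp_scale Exp_const /XN Exp_lin mulrA mulVf ?p0 // mul1r.
rewrite /c0 /W1 -big_split; apply: eq_bigr => r _ /=.
case: (boolP (r \in S)) => rS /=.
  by rewrite inE in rS; rewrite (HG a r (all_ones n) rS) b2R1 mulr1 add0r.
by rewrite addr0 /k mulrC.
Qed.


Lemma dep_Z (m : R) : dep S (fun T => zu u a T - m).
Proof. apply: (dep_add (g := fun _ => - m)); [exact: dep_z | exact: dep_cst]. Qed.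

Lemma Cov_eq : Cov p (xexp E w a) (zu u a) =
  Exp p (fun T => XS T * (zu u a T - Exp p (zu u a))).
Proof.
set mz := Exp p (zu u a).
rewrite /Cov.
rewrite (Exp_ext p (f := fun T => xexp E w a T * zu u a T) (g := fun T => XS T * zu u a T + zu u a T * XN T)); last first.
  by move=> T; rewrite xsplit; ring.
rewrite Exp_add (Exp_indep' p dep_z dep_XN).
rewrite (Exp_ext p (f := xexp E w a) (g := fun T => XS T + XN T)); last by move=> T; rewrite xsplit.
rewrite Exp_add.
rewrite (Exp_ext p (f := fun T => XS T * (zu u a T - mz)) (g := fun T => XS T * zu u a T + (- mz) * XS T)); last first.
  by move=> T; ring.
rewrite Exp_add Exp_scale -/mz; ring.
Qed.

Lemma beta_part : Exp p (fun T => beta_hat E w alpha beta gamma p u a T * W1_hat E w p c a T)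
  = beta a * W1 E w a.
Proof.
set mz := Exp p (zu u a).
set cv := Cov p (xexp E w a) (zu u a).
set W := W1_hat E w p c a.
rewrite (Exp_ext p (g := fun T => cv^-1 * (beta a * ((XS T * (zu u a T - mz)) * W T)
   + (zu u a T - mz) * ((alpha a + beta a * XN T + gamma a * b2R R (T a)) * W T)))); last first.
  by move=> T; rewrite /beta_hat /Yout xsplit -/mz -/cv; ring.
rewrite Exp_scale Exp_add Exp_scale.
rewrite (Exp_indep' p (dep_mul dep_XS (dep_Z mz)) dep_W).
have dh : dep (~: S) (fun T => (alpha a + beta a * XN T + gamma a * b2R R (T a)) * W T).
  apply: (dep_mul (g := W)); last exact: dep_W.
  apply: (dep_add (f := fun T => alpha a + beta a * XN T) (g := fun T => gamma a * b2R R (T a))).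
    apply: (dep_add (f := fun _ => alpha a) (g := fun T => beta a * XN T)); first exact: dep_cst.
    apply: (dep_mul (f := fun _ => beta a) (g := XN)); [exact: dep_cst | exact: dep_XN].
  apply: (dep_mul (f := fun _ => gamma a) (g := fun T => b2R R (T a))); [exact: dep_cst | exact: dep_Ta].
rewrite (Exp_indep' p (dep_Z mz) dh).
have -> : Exp p (fun T => zu u a T - mz) = 0.
  by rewrite Exp_add Exp_const subrr.
rewrite -Cov_eq -/cv EW mul0r addr0.
have := Hcov a; rewrite -/cv => hc.
by field.
Qed.

Lemma dep_x : dep (~: [set a]) (xexp E w a).
Proof.
move=> T T' H; rewrite !xE; apply: (dep_lin (A := ~: [set a])) => // r.
rewrite in_setC negbK in_set1 => /eqP ->.
by rewrite /k (Hself a).1 mulr0.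
Qed.

Lemma gamma_part : Exp p (gamma_hat E w alpha beta gamma p a) = gamma a.
Proof.
have hp := p0; have hp1 := p1.
pose D T := b2R R (T a) * (p^-1 + (1 - p)^-1) + - (1 - p)^-1.
rewrite (Exp_ext p (g := fun T => D T * (alpha a + beta a * xexp E w a T)
   + (b2R R (T a) * (gamma a / p) + 0))); last first.
  move=> T; rewrite /gamma_hat /Yout /D; case: (T a); rewrite ?b2R1 ?b2R0; field; by rewrite hp hp1.
have dD : dep [set a] D.
  by move=> T T' H; rewrite /D H // in_set1.
have dA : dep (~: [set a]) (fun T => alpha a + beta a * xexp E w a T).
  apply: (dep_add (f := fun _ => alpha a) (g := fun T => beta a * xexp E w a T)); first exact: dep_cst.
  apply: (dep_mul (f := fun _ => beta a) (g := xexp E w a)); [exact: dep_cst | exact: dep_x].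
rewrite Exp_add (Exp_indep' p dD dA) Exp_lin1 /D Exp_lin1.
by field; rewrite hp hp1.
Qed.

End Main.

Theorem corollary1 (R : realFieldType) (n : nat)
    (E : 'I_n -> 'I_n -> trt n -> bool)
    (w u c : 'I_n -> 'I_n -> R) (alpha beta gamma : 'I_n -> R)
    (p : R) (G : {set 'I_n * 'I_n}) :
  anchor_subgraph E G ->
  (* (a) edges are r-driven *)
  r_driven E ->
  (* (b) T_r independent Bernoulli(p), p in (0,1) *)
  0 < p < 1 ->
  (* (c) *)
  (forall a r : 'I_n, u a r != 0 -> (a, r) \in G) ->
  (* (d) *)
  (forall a r : 'I_n, c a r = if (a, r) \in G then 1 else 0 : R) ->
  (* (e) *)
  (forall a r : 'I_n, (a, r) \in G -> w a r != 0) ->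
  (* (f) *)
  (forall a : 'I_n, (0 < #|[set r : 'I_n | u a r != 0%R]|)%N) ->
  (* well-definedness of beta_hat: nonzero covariance denominator *)
  (forall a : 'I_n, Cov p (xexp E w a) (zu u a) != 0) ->
  (* no self-loops in the weights *)
  (forall a : 'I_n, w a a = 0 /\ u a a = 0) ->
  Exp p (mu_hat_uni E w alpha beta gamma p u c)
  = TTE E w beta gamma.
Proof.
move=> HG Hrd Hp Hu Hc Hw Hf Hcov Hself.
rewrite /mu_hat_uni /TTE Exp_scale Exp_sum; congr (_ * _); apply: eq_bigr => a _.
rewrite Exp_add; erewrite beta_part; try eassumption.
erewrite gamma_part; try eassumption.
by rewrite mulrC.
Qed.
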